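(* Let $\mathcal{H}$ be a separable Hilbert space and $H$ a positive Hermitian operator on $\mathcal{H}$ with purely discrete spectrum, such that there is no infinite-dimensional subspace on which $H$ is bounded. For $E>0$ let $\mathcal{P}(E)$ be the set of density operators $\rho$ on $\mathcal{H}$ with $\mathrm{Tr}\,\rho H\le E$. Then every sequence in $\mathcal{P}(E)$ has a subsequence that is Cauchy with respect to the Hilbert–Schmidt norm.
   Context: A density operator is a Hermitian, positive semidefinite, trace-class operator of trace 1. $\|A\|_2=\sqrt{\mathrm{Tr}\,A^\dagger A}$ is the Hilbert–Schmidt norm. For positive $\rho$, $\mathrm{Tr}\,\rho H=\sum_n\langle n|\rho|n\rangle E_n$ in an eigenbasis of $H$. *)

(* Defs.v *)
From HB Require Import structures.
From mathcomp Require Import all_boot all_order all_algebra.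
From mathcomp Require Import all_classical all_reals.
From mathcomp Require Import ereal esum.
From mathcomp Require Import complex.

Set Implicit Arguments.
Unset Strict Implicit.
Unset Printing Implicit Defensive.

Import Order.TTheory GRing.Theory Num.Theory.
Local Open Scope classical_set_scope.
Local Open Scope ring_scope.

(* The separable Hilbert space is modelled, in an orthonormal eigenbasis
   of H indexed by a countable type I, as l^2(I; R[i]).  Vectors are
   coefficient families  v : I -> R[i],  operators are matrices
   A : I -> I -> R[i]  (A i j = <i|A|j>). *)

Section Defs.
Variables (R : realType) (I : countType).
Local Notation C := R[i].

Definition sqmod (z : C) : R := complex.Re z ^+ 2 + complex.Im z ^+ 2.

Definition l2norm2 (v : I -> C) : \bar R :=
  \esum_(i in [set: I]) (sqmod (v i))%:E.

Definition in_l2 (v : I -> C) : Prop := (l2norm2 v < +oo)%E.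

(* H = diag(Ev) in the eigenbasis: ||H v||^2 = sum_i Ev_i^2 |v_i|^2 *)
Definition Hnorm2 (Ev : I -> R) (v : I -> C) : \bar R :=
  \esum_(i in [set: I]) (Ev i ^+ 2 * sqmod (v i))%:E.

Definition in_dom (Ev : I -> R) (v : I -> C) : Prop :=
  in_l2 v /\ (Hnorm2 Ev v < +oo)%E.

Definition lin_subspace (V : set (I -> C)) : Prop :=
  V (fun=> 0) /\
  (forall (a : C) (u v : I -> C), V u -> V v -> V (fun i => a * u i + v i)).

Definition lin_indep (n : nat) (f : 'I_n -> I -> C) : Prop :=
  forall c : 'I_n -> C,
    (forall i, \sum_(k < n) c k * f k i = 0) -> forall k, c k = 0.

Definition infinite_dim (V : set (I -> C)) : Prop :=
  forall n : nat, exists f : 'I_n -> I -> C,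
    (forall k, V (f k)) /\ lin_indep f.

Definition H_bounded_on (Ev : I -> R) (V : set (I -> C)) : Prop :=
  (forall v, V v -> in_dom Ev v) /\
  exists c : R, forall v, V v -> (Hnorm2 Ev v <= (c ^+ 2)%:E * l2norm2 v)%E.

Definition no_inf_dim_bounded_subspace (Ev : I -> R) : Prop :=
  forall V : set (I -> C),
    lin_subspace V -> H_bounded_on Ev V -> ~ infinite_dim V.

(* density operator: Hermitian, positive semidefinite, trace class with
   trace 1 (for a positive operator, trace class <=> sum of diagonal
   entries finite) *)
Definition hermitian (A : I -> I -> C) : Prop :=
  forall i j, A j i = (A i j)^*%C.

Definition psd (A : I -> I -> C) : Prop :=
  forall (s : seq I) (x : I -> C),
    0 <= \sum_(i <- s) \sum_(j <- s) (x i)^*%C * A i j * x j.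

Definition trace_pos (A : I -> I -> C) : \bar R :=
  \esum_(i in [set: I]) (complex.Re (A i i))%:E.

Definition density (rho : I -> I -> C) : Prop :=
  hermitian rho /\ psd rho /\ trace_pos rho = 1%E.

(* Tr rho H = sum_n <n|rho|n> E_n *)
Definition energy (Ev : I -> R) (rho : I -> I -> C) : \bar R :=
  \esum_(i in [set: I]) (complex.Re (rho i i) * Ev i)%:E.

Definition PE (Ev : I -> R) (En : R) : set (I -> I -> C) :=
  [set rho | density rho /\ (energy Ev rho <= En%:E)%E].

Definition hs_norm2 (A : I -> I -> C) : \bar R :=
  \esum_(p in [set: I * I]) (sqmod (A p.1 p.2))%:E.

Definition hs_norm (A : I -> I -> C) : \bar R :=
  if (hs_norm2 A < +oo)%E then (Num.sqrt (fine (hs_norm2 A)))%:E else +oo%E.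

Definition hs_cauchy (u : nat -> I -> I -> C) : Prop :=
  forall eps : R, 0 < eps -> exists N : nat, forall m n : nat,
    (N <= m)%N -> (N <= n)%N ->
    (hs_norm (fun i j => (u m i j - u n i j)%R) < eps%:E)%E.

End Defs.

(* Main.v *)
Require Import Defs.
From HB Require Import structures.
From mathcomp Require Import all_boot all_order all_algebra.
From mathcomp Require Import all_classical all_reals.
From mathcomp Require Import ereal esum.
From mathcomp Require Import complex.
From mathcomp Require Import ring lra finmap.
Import Order.TTheory GRing.Theory Num.Theory.
Local Open Scope classical_set_scope.
Local Open Scope ring_scope.
From mathcomp Require Import sequences normedtype.
Import numFieldNormedType.Exports.
Section S.
Variable R : realType.
Local Notation C := R[i].
Lemma ReD (x y : C) : complex.Re (x + y) = complex.Re x + complex.Re y.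
Proof. by case: x => a b; case: y => c d. Qed.
Lemma ImD (x y : C) : complex.Im (x + y) = complex.Im x + complex.Im y.
Proof. by case: x => a b; case: y => c d. Qed.
Lemma ReM (x y : C) : complex.Re (x * y) = complex.Re x * complex.Re y - complex.Im x * complex.Im y.
Proof. by case: x => a b; case: y => c d. Qed.
Lemma ImM (x y : C) : complex.Im (x * y) = complex.Re x * complex.Im y + complex.Im x * complex.Re y.
Proof. by case: x => a b; case: y => c d. Qed.
Lemma ReN (x : C) : complex.Re (- x) = - complex.Re x.
Proof. by case: x. Qed.
Lemma ImN (x : C) : complex.Im (- x) = - complex.Im x.
Proof. by case: x. Qed.
Lemma ReJ (x : C) : complex.Re (x^*)%C = complex.Re x.
Proof. by case: x. Qed.
Lemma ImJ (x : C) : complex.Im (x^*)%C = - complex.Im x.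
Proof. by case: x. Qed.
Lemma ReR (x : R) : complex.Re (x%:C)%C = x. Proof. by []. Qed.
Lemma ImR (x : R) : complex.Im (x%:C)%C = 0. Proof. by []. Qed.
Lemma Re1 : complex.Re (1 : C) = 1. Proof. by []. Qed.
Lemma Im1 : complex.Im (1 : C) = 0. Proof. by []. Qed.
Lemma Re0 : complex.Re (0 : C) = 0. Proof. by []. Qed.
Lemma Im0 : complex.Im (0 : C) = 0. Proof. by []. Qed.
Variable I : countType.
Implicit Types rho : I -> I -> C.

Lemma dens_diag rho i : density rho ->
  complex.Im (rho i i) = 0 /\ 0 <= complex.Re (rho i i).
Proof.
case=> _ [Hp _]; have := Hp [:: i] (fun=> 1).
rewrite !big_seq1 conjc1 mul1r mulr1 lecE /= => /andP[/eqP <- ->]; done.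
Qed.

Lemma dens_pair rho i j : density rho -> i != j ->
  sqmod (rho i j) <= complex.Re (rho i i) * complex.Re (rho j j).
Proof.
move=> Hd ij; have [Hh [Hp _]] := Hd.
have [Ii di] := dens_diag _ i Hd; have [Ij dj] := dens_diag _ j Hd.
have key : forall s : R, 0 <= s ^+ 2 * complex.Re (rho i i) - 2 * s * sqmod (rho i j)
    + sqmod (rho i j) * complex.Re (rho j j).
  move=> s; have := Hp [:: i; j] (fun k => if k == i then s%:C%C else - (rho i j)^*%C).
  have ji : (j == i) = false by rewrite eq_sym (negbTE ij).
  rewrite !big_cons !big_nil eqxx ji !addr0 lecE => /andP[_].
  rewrite (Hh i j) !(ReD, ReM, ImM, ReN, ImN, ReJ, ImJ) /= Ii Ij.
  rewrite /sqmod.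
  move=> H. nra.
have p0 : 0 <= sqmod (rho i j) by rewrite /sqmod; nra.
move: key p0; set p := sqmod _; set a := complex.Re (rho i i); set b := complex.Re (rho j j) => key p0.
have [a0|apos] := eqVneq a 0.
  have := key (b + 1); rewrite a0; nra.
have ag : 0 < a by rewrite lt0r apos.
have [->|pp] := eqVneq p 0; first by rewrite mulr_ge0.
have pg : 0 < p by rewrite lt0r pp.
have := key (p / a); set q := p / a; have qa : q * a = p by rewrite /q mulfVK.
move=> k2; have qg : 0 < q by rewrite /q divr_gt0.
have : 0 <= p * (b - q) by nra.
rewrite pmulr_rge0 // subr_ge0 => qb. rewrite -qa mulrC ler_pM2l //.
Qed.
End S.
Arguments dens_diag {R I}.
Arguments dens_pair {R I}.
Section E.
Variable R : realType.
Local Notation C := R[i].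

Lemma esum_le_seq (T : choiceType) (a : T -> \bar R) (c : \bar R) :
  (forall s : seq T, uniq s -> (\sum_(x <- s) a x <= c)%E) ->
  (\esum_(x in [set: T]) a x <= c)%E.
Proof.
move=> H; apply: ge_ereal_sup => _ [X [finX _] <-].
by rewrite fsbig_finite //; apply: H; exact: fset_uniq.
Qed.

Lemma seq_le_esum (T : choiceType) (a : T -> \bar R) (s : seq T) : uniq s ->
  (\sum_(x <- s) a x <= \esum_(x in [set: T]) a x)%E.
Proof.
move=> us; apply: esum_ge; exists [set` s]; first by split.
by rewrite -fsbig_seq.
Qed.

Variable I : countType.
Implicit Types rho : I -> I -> C.

Lemma dens_sum rho s : density rho -> uniq s ->
  \sum_(i <- s) complex.Re (rho i i) <= 1.
Proof.
case=> _ [_ Ht] us; rewrite -lee_fin -sumEFin -Ht; exact: seq_le_esum.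
Qed.

Lemma dens_energy (Ev : I -> R) En rho s : PE Ev En rho -> uniq s ->
  \sum_(i <- s) (complex.Re (rho i i) * Ev i) <= En.
Proof.
case=> _ He us; rewrite -lee_fin -sumEFin; apply: le_trans He; exact: seq_le_esum.
Qed.
End E.
Arguments dens_sum {R I}.
Arguments dens_energy {R I}.
Section F.
Variable R : realType.
Local Notation C := R[i].

Lemma sum_sub_uniq (T : eqType) (g : T -> R) (t u : seq T) :
  (forall x, 0 <= g x) -> uniq t -> uniq u -> {subset t <= u} ->
  \sum_(x <- t) g x <= \sum_(x <- u) g x.
Proof.
move=> g0 ut uu tu.
rewrite -(perm_big _ (permEl (perm_filterC (mem t) u))) big_cat /=.
have -> : \sum_(x <- [seq x <- u | mem t x]) g x = \sum_(x <- t) g x.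
  apply: perm_big; apply: uniq_perm; rewrite ?filter_uniq //.
  by move=> x; rewrite mem_filter; apply/andP/idP => [[]|xt] //; split => //; exact: tu.
by rewrite lerDl sumr_ge0.
Qed.

Lemma sum_supp (T : eqType) (g : T -> R) (t s : seq T) :
  (forall x, 0 <= g x) -> (forall x, x \notin s -> g x = 0) -> uniq t ->
  \sum_(x <- t) g x <= \sum_(x <- undup s) g x.
Proof.
move=> g0 gs ut.
have -> : \sum_(x <- t) g x = \sum_(x <- [seq x <- t | x \in s]) g x.
  rewrite big_filter [RHS]big_mkcond /=; apply: eq_bigr => x _.
  by case: ifP => // /negbT /gs.
apply: sum_sub_uniq => //; first by rewrite filter_uniq.
  exact: undup_uniq.
by move=> x; rewrite mem_filter mem_undup => /andP[].
Qed.

Variable I : countType.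

Lemma esum_supp (a : I -> R) (s : seq I) :
  (forall x, 0 <= a x) -> (forall x, x \notin s -> a x = 0) ->
  (\esum_(x in [set: I]) (a x)%:E <= (\sum_(x <- undup s) a x)%:E)%E.
Proof.
move=> a0 as0; apply: esum_le_seq => t ut; rewrite sumEFin lee_fin.
exact: sum_supp.
Qed.


Lemma finite_low (Ev : I -> R) (Hpos : forall i, 0 <= Ev i)
  (Hspec : no_inf_dim_bounded_subspace Ev) (M : R) :
  exists f : seq I, forall i, Ev i <= M -> i \in f.
Proof.
apply: contrapT => nf.
have H : forall f : seq I, exists i, Ev i <= M /\ i \notin f.
  move=> f; apply: contrapT => nex; apply: nf; exists f => i Hi.
  apply: contrapT => nin; apply: nex; exists i; split => //; exact/negP.
have Hs : forall n, exists s : seq I, [/\ uniq s, size s = n & forall i, i \in s -> Ev i <= M].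
  elim=> [|n [s [us ss sM]]]; first by exists [::].
  have [i [iM ins]] := H s; exists (i :: s); split => //=; first by rewrite ins.
    by rewrite ss.
  by move=> x; rewrite inE => /orP[/eqP->|/sM].
pose V := fun v : I -> C => exists s : seq I,
  (forall i, i \notin s -> v i = 0) /\ (forall i, i \in s -> Ev i <= M).
have sqm0 : forall z : C, 0 <= sqmod z by move=> z; rewrite /sqmod addr_ge0 // sqr_ge0.
apply: (Hspec V).
- split; first by exists [::].
  move=> a u v [su [su0 suM]] [sv [sv0 svM]]; exists (su ++ sv); split.
    by move=> i; rewrite mem_cat negb_or => /andP[/su0 -> /sv0 ->]; rewrite mulr0 addr0.
  by move=> i; rewrite mem_cat => /orP[/suM|/svM].
- split.
    move=> v [s [s0 sM]]; split.
      rewrite /in_l2 /l2norm2; apply: le_lt_trans (@esum_supp (fun x => sqmod (v x)) s _ _) _ => //.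
        by move=> x /s0 ->; rewrite /sqmod /= expr2 mulr0 addr0.
      exact: ltry.
    rewrite /Hnorm2; apply: le_lt_trans (@esum_supp (fun x => Ev x ^+ 2 * sqmod (v x)) s _ _) _ => //.
        by move=> x; rewrite mulr_ge0 // sqr_ge0.
      by move=> x /s0 ->; rewrite /sqmod /= expr0n addr0 mulr0.
    exact: ltry.
  exists M => v [s [s0 sM]].
  rewrite /Hnorm2; apply: le_trans (@esum_supp (fun x => Ev x ^+ 2 * sqmod (v x)) s _ _) _ => //.
      by move=> x; rewrite mulr_ge0 // sqr_ge0.
    by move=> x /s0 ->; rewrite /sqmod /= expr0n addr0 mulr0.
  apply: (@le_trans _ _ ((M ^+ 2) * \sum_(x <- undup s) sqmod (v x))%:E).
    rewrite lee_fin mulr_sumr big_seq [X in _ <= X]big_seq; apply: ler_sum => x.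
    rewrite mem_undup => /sM xm; have h1 := Hpos x; have h2 := sqm0 (v x).
    have h3 : Ev x ^+ 2 <= M ^+ 2 by rewrite ler_sqr ?nnegrE //; apply: le_trans xm.
    exact: ler_wpM2r.
  rewrite EFinM; apply: lee_wpmul2l; first by rewrite lee_fin sqr_ge0.
  rewrite -sumEFin; apply: seq_le_esum; exact: undup_uniq.
- move=> n; have [s [us ss sM]] := Hs n.
  exists (fun k : 'I_n => fun i : I => ((i == nth i s k)%:R : C)); split.
    move=> k; exists s; split => // i ins.
    have kn : (k < size s)%N by rewrite ss.
    case: eqP => // ei; move: ins; rewrite ei mem_nth //.
  move=> c Hc k.
  have kn : (k < size s)%N by rewrite ss.
  case: s us ss sM kn Hc => [|x0 s'] us ss sM kn Hc; first by [].
  have := Hc (nth x0 (x0 :: s') k).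
  set y := nth x0 (x0 :: s') k.
  rewrite (bigD1 k) //= [nth y _ k](set_nth_default x0) // eqxx mulr1 big1 ?addr0 // => k' k'k.
  have k'n : (k' < size (x0 :: s'))%N by rewrite ss.
  rewrite (set_nth_default x0 _ k'n) nth_uniq // ?ss //.
  by rewrite (negbTE (_ : nat_of_ord k != nat_of_ord k')) ?mulr0 // eq_sym.
Qed.
End F.
Arguments finite_low {R I}.
Arguments sum_sub_uniq {R T}.
Arguments sum_supp {R T}.
Arguments esum_supp {R I}.
Section D.
Variable R : realType.

Lemma cvg_cauchy_nat (w : nat -> R) : cvgn w -> forall eta : R, 0 < eta ->
  exists N, forall m n, (N <= m)%N -> (N <= n)%N -> `|w m - w n| <= eta.
Proof.
move=> /cvg_ex[l Hl] eta e0.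
have := cvgr_dist_le _ _ Hl (eta / 2); rewrite divr_gt0 // => /(_ _ isT).
case=> N _ HN; exists N => m n Nm Nn.
have := HN m Nm; have := HN n Nn => /= h1 h2.
rewrite (_ : w m - w n = (l - w n) - (l - w m)); last by ring.
apply: le_trans (ler_normB _ _) _. by rewrite (splitr eta) lerD.
Qed.

Lemma bnd_fun (w : nat -> R) (B : R) : (forall k, `|w k| <= B) -> bounded_fun w.
Proof.
move=> H; rewrite /bounded_near /=; near=> M => x _.
apply: le_trans (H x) _; near: M; apply: nbhs_pinfty_ge. exact: num_real.
Unshelve. all: by end_near.
Qed.

Lemma inc_mono (f : nat -> nat) : (forall k, (f k < f k.+1)%N) ->
  forall m n, (m < n)%N -> (f m < f n)%N.
Proof.
move=> Hf m; elim=> // n IH; rewrite ltnS leq_eqVlt => /orP[/eqP->//|/IH h].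
exact: ltn_trans h (Hf n).
Qed.

Lemma inc_ge (f : nat -> nat) : (forall k, (f k < f k.+1)%N) -> forall k, (k <= f k)%N.
Proof. move=> Hf; elim=> // k IH; exact: leq_ltn_trans IH (Hf k). Qed.

Lemma diag (u : nat -> nat -> R) (B : R) : (forall c k, `|u c k| <= B) ->
  exists phi : nat -> nat, (forall k, (phi k < phi k.+1)%N) /\
  forall c (eta : R), 0 < eta -> exists N, forall m n, (N <= m)%N -> (N <= n)%N ->
    `|u c (phi m) - u c (phi n)| <= eta.
Proof.
move=> HB.
have step : forall p : nat * (nat -> nat), exists sg : nat -> nat,
    (forall k, (sg k < sg k.+1)%N) /\ cvgn (u p.1 \o p.2 \o sg).
  move=> [c psi]; have [sg Hsg Hc] := bolzano_weierstrass (@bnd_fun (u c \o psi) B (fun k => HB c (psi k))).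
  exists sg; split => // k.
  have h : (sg k.+1 <= sg k)%N = (k.+1 <= k)%N := Hsg k.+1 k.
  by rewrite ltnNge h ltnn.
have [S HS] := choice step.
pose Q := fix Q (n : nat) : nat -> nat := if n is n'.+1 then Q n' \o S (n', Q n') else id.
have QS : forall n, Q n.+1 = Q n \o S (n, Q n) by [].
have Qinc : forall n k, (Q n k < Q n k.+1)%N.
  elim=> [//|n IH] k; rewrite QS /=; apply: inc_mono => //; exact: (HS (n, Q n)).1.
have Qd : forall a b, (a <= b)%N -> forall x, exists y, (x <= y)%N /\ Q b x = Q a y.
  move=> a; elim=> [|b IH]; first by rewrite leqn0 => /eqP-> x; exists x.
  rewrite leq_eqVlt => /orP[/eqP-> x|]; first by exists x.
  rewrite ltnS => /IH H x; have [y [y1 y2]] := H (S (b, Q b) x).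
  exists y; split; last by rewrite QS /= y2.
  exact: leq_trans (inc_ge _ (HS (b, Q b)).1 x) y1.
exists (fun k => Q k.+1 k); split.
  move=> k; change (Q k.+1 k < Q k.+1 (S (k.+1, Q k.+1) k.+1))%N.
  apply: inc_mono; [exact: Qinc | exact: (inc_ge _ (HS (k.+1, Q k.+1)).1 k.+1)].
move=> c eta e0; have [N HN] := cvg_cauchy_nat _ (HS (c, Q c)).2 _ e0.
exists (maxn N c) => m n; rewrite !geq_max => /andP[Nm cm] /andP[Nn cn].
have [ym [ym1 ->]] := Qd c.+1 m.+1 cm m.
have [yn [yn1 ->]] := Qd c.+1 n.+1 cn n.
rewrite QS; apply: HN; [exact: leq_trans ym1 | exact: leq_trans yn1].
Qed.
End D.
Arguments diag {R}.

Section M.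
Variable R : realType.
Local Notation C := R[i].
Variable I : countType.

Lemma dens_pair' (rho : I -> I -> C) i j : density rho ->
  sqmod (rho i j) <= complex.Re (rho i i) * complex.Re (rho j j).
Proof.
move=> Hd; have [<-|ij] := eqVneq i j; last exact: dens_pair.
have [Ii _] := dens_diag _ i Hd; by rewrite /sqmod Ii expr0n /= addr0 expr2.
Qed.

Lemma dens_le1 (rho : I -> I -> C) i : density rho -> complex.Re (rho i i) <= 1.
Proof. by move=> Hd; have := dens_sum _ [:: i] Hd; rewrite big_seq1; apply. Qed.

Lemma sqmodB_le (x y : C) : sqmod (x - y) <= 2 * sqmod x + 2 * sqmod y.
Proof.
rewrite /sqmod ReD ImD ReN ImN.
have h1 := sqr_ge0 (complex.Re x + complex.Re y); have h2 := sqr_ge0 (complex.Im x + complex.Im y).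
nra.
Qed.

Lemma sqmod_ge0 (x : C) : 0 <= sqmod x.
Proof. by rewrite /sqmod addr_ge0 // sqr_ge0. Qed.

Lemma fin_N (T : eqType) (P : T -> nat -> nat -> Prop) (l : seq T) :
  (forall x, exists N, forall m n, (N <= m)%N -> (N <= n)%N -> P x m n) ->
  exists N, forall x, x \in l -> forall m n, (N <= m)%N -> (N <= n)%N -> P x m n.
Proof.
move=> H; elim: l => [|x l [N2 H2]]; first by exists 0%N.
have [N1 H1] := H x; exists (maxn N1 N2) => y; rewrite inE => /orP[/eqP->|yl] m n;
  rewrite !geq_max => /andP[a b] /andP[c d]; [exact: H1 | exact: H2].
Qed.

Lemma sum_prod2 (T : Type) (s : seq T) (x y : T -> R) (r : T -> T -> R) :
  \sum_(i <- s) \sum_(j <- s) (x i * y j + r i j) =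
  (\sum_(i <- s) x i) * (\sum_(j <- s) y j) + \sum_(i <- s) \sum_(j <- s) r i j.
Proof.
rewrite mulr_suml -big_split; apply: eq_bigr => i _; rewrite mulr_sumr -big_split //.
Qed.

Lemma sum_prod1 (T : Type) (s : seq T) (x y : T -> R) :
  \sum_(i <- s) \sum_(j <- s) (x i * y j) =
  (\sum_(i <- s) x i) * (\sum_(j <- s) y j).
Proof.
rewrite mulr_suml; apply: eq_bigr => i _; rewrite mulr_sumr //.
Qed.

End M.
Arguments dens_pair' {R I}.
Arguments dens_le1 {R I}.
Arguments sqmodB_le {R}.
Arguments sqmod_ge0 {R}.
Arguments sum_prod2 {R T}.
Arguments sum_prod1 {R T}.

Theorem mainTheorem9 (R : realType) (I : countType) (Ev : I -> R)
  (Hpos : forall i, 0 <= Ev i)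
  (Hspec : no_inf_dim_bounded_subspace Ev)
  (En : R) (HEn : 0 < En)
  (rho : nat -> I -> I -> R[i])
  (Hrho : forall k, PE Ev En (rho k)) :
  exists phi : nat -> nat, (forall k, (phi k < phi k.+1)%N) /\
    hs_cauchy (fun k => rho (phi k)).
Proof.
pose uc (c k : nat) : R := if (choice.unpickle c : option ((I * I) * bool)) is Some x
   then (if x.2 then complex.Re (rho k x.1.1 x.1.2) else complex.Im (rho k x.1.1 x.1.2)) else 0.
have Hd k : density (rho k) by case: (Hrho k).
have bnd : forall c k, `|uc c k| <= 1.
  move=> c k; rewrite /uc; case: (choice.unpickle c) => [[[i j] b]|]; last by rewrite normr0.
  have h1 := dens_pair' _ i j (Hd k); have h2 := dens_le1 _ i (Hd k); have h3 := dens_le1 _ j (Hd k).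
  have [_ h4] := dens_diag _ i (Hd k); have [_ h5] := dens_diag _ j (Hd k).
  have h6 : complex.Re (rho k i i) * complex.Re (rho k j j) <= 1 by rewrite mulr_ile1.
  move: h1; rewrite /sqmod => h1.
  by case: b => /=; rewrite ler_norml; apply/andP; split; nra.
have [phi [phiinc Hc]] := diag _ _ bnd.
exists phi; split => //.
move=> eps e0.
pose M := 64 * En / eps ^+ 2.
have M0 : 0 < M by rewrite /M divr_gt0 // ?mulr_gt0 // exprn_gt0.
have [f Hf] := finite_low _ Hpos Hspec M.
pose K := \sum_(i <- undup f) (1 : R).
have K0 : 0 <= K by rewrite sumr_ge0.
pose dl := eps ^+ 2 / 8 / (K * K + 1).
have dl0 : 0 < dl by rewrite /dl !divr_gt0 // ?exprn_gt0 // ltr_wpDl // mulr_ge0.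
pose eta := Num.min 1 (dl / 2).
have eta0 : 0 < eta by rewrite /eta lt_min ltr01 divr_gt0.
pose P := fun (p : I * I) m n =>
   `|complex.Re (rho (phi m) p.1 p.2) - complex.Re (rho (phi n) p.1 p.2)| <= eta /\
   `|complex.Im (rho (phi m) p.1 p.2) - complex.Im (rho (phi n) p.1 p.2)| <= eta.
have HP : forall p : I * I, exists N, forall m n, (N <= m)%N -> (N <= n)%N -> P p m n.
  move=> [i j]; have [N1 H1] := Hc (choice.pickle ((i, j), true)) eta eta0.
  have [N2 H2] := Hc (choice.pickle ((i, j), false)) eta eta0.
  exists (maxn N1 N2) => m n; rewrite !geq_max => /andP[a b] /andP[c d]; split.
    by have := H1 m n a c; rewrite /uc choice.pickleK.
  by have := H2 m n b d; rewrite /uc choice.pickleK.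
have [N HN] := fin_N _ P [seq (i, j) | i <- f, j <- f] HP.
exists N => m n Nm Nn.
change (hs_norm (fun i j => (rho (phi m) i j - rho (phi n) i j)%R) < eps%:E)%E.
pose D := fun i j => rho (phi m) i j - rho (phi n) i j.
pose dm i := complex.Re (rho (phi m) i i).
pose dn i := complex.Re (rho (phi n) i i).
pose a i := ((i \in f)%:R : R).
pose bb i := ((i \notin f)%:R : R).
have e1 : eta <= 1 by rewrite /eta ge_min lexx.
have e2 : eta <= dl / 2 by rewrite /eta ge_min lexx orbT.
have HS2 : (hs_norm2 D <= (eps ^+ 2 / 4)%:E)%E.
  apply: esum_le_seq => X uX; rewrite sumEFin lee_fin.
  pose S := undup ([seq p.1 | p <- X] ++ [seq p.2 | p <- X] ++ f).
  have uS : uniq S := undup_uniq _.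
  apply: (le_trans (sum_sub_uniq (fun p : I * I => sqmod (D p.1 p.2)) X [seq (i, j) | i <- S, j <- S] (fun p => sqmod_ge0 _) uX _ _)).
      by apply: allpairs_uniq => //; move=> [? ?] [? ?].
    move=> [i j] pX; apply: allpairs_f; rewrite mem_undup !mem_cat.
      by apply/orP; left; apply/mapP; exists (i, j).
    by apply/orP; right; apply/orP; left; apply/mapP; exists (i, j).
  rewrite big_allpairs /=.
  have PW : forall i j, sqmod (D i j) <= (dl * a i) * a j + ((2 * (bb i * dm i)) * dm j +
      ((2 * dm i) * (bb j * dm j) + ((2 * (bb i * dn i)) * dn j + (2 * dn i) * (bb j * dn j)))).
    move=> i j.
    have dmi := (dens_diag _ i (Hd (phi m))).2; have dmj := (dens_diag _ j (Hd (phi m))).2.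
    have dni := (dens_diag _ i (Hd (phi n))).2; have dnj := (dens_diag _ j (Hd (phi n))).2.
    have pm := dens_pair' _ i j (Hd (phi m)); have pn := dens_pair' _ i j (Hd (phi n)).
    have sub := sqmodB_le (rho (phi m) i j) (rho (phi n) i j).
    rewrite /a /bb /dm /dn /D; case Hi: (i \in f); case Hj: (j \in f) => /=;
      rewrite ?mulr1n ?mulr0n ?mul0r ?mulr0 ?mul1r ?mulr1 ?addr0 ?add0r.
    - have [h1 h2] : P (i, j) m n by apply: HN => //; apply: allpairs_f.
      move: h1 h2; rewrite /= !ler_norml => /andP[l1 l2] /andP[l3 l4].
      rewrite /sqmod ReD ImD ReN ImN; nra.
    - nra.
    - nra.
    - nra.
  apply: le_trans (ler_sum _ (fun i _ => ler_sum _ (fun j _ => PW i j))) _.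
  rewrite (sum_prod2 S (fun i => dl * a i) a).
  rewrite (sum_prod2 S (fun i => 2 * (bb i * dm i)) dm).
  rewrite (sum_prod2 S (fun i => 2 * dm i) (fun j => bb j * dm j)).
  rewrite (sum_prod2 S (fun i => 2 * (bb i * dn i)) dn).
  rewrite (sum_prod1 S (fun i => 2 * dn i) (fun j => bb j * dn j)).
  rewrite -!mulr_sumr.
  have tB : forall k, \sum_(i <- S) bb i * complex.Re (rho k i i) <= En / M.
    move=> k; have H : M * \sum_(i <- S) bb i * complex.Re (rho k i i) <= En.
      rewrite mulr_sumr; apply: le_trans (dens_energy _ _ _ S (Hrho k) uS).
      apply: ler_sum => i _; have di := (dens_diag _ i (Hd k)).2.
      rewrite /bb; case Hi: (i \in f) => /=; rewrite ?mulr0n ?mulr1n ?mul0r ?mulr0 ?mul1r.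
        exact: mulr_ge0.
      have : M < Ev i by rewrite ltNge; apply/negP => /Hf; rewrite Hi.
      by move=> /ltW h; rewrite [M * _]mulrC; exact: ler_wpM2l.
    by rewrite ler_pdivlMr // mulrC.
  have tB0 : forall k, 0 <= \sum_(i <- S) bb i * complex.Re (rho k i i).
    move=> k; apply: sumr_ge0 => i _; apply: mulr_ge0; first exact: ler0n.
    exact: (dens_diag _ i (Hd k)).2.
  have tD : forall k, \sum_(i <- S) complex.Re (rho k i i) <= 1.
    by move=> k; exact: dens_sum _ S (Hd k) uS.
  have tD0 : forall k, 0 <= \sum_(i <- S) complex.Re (rho k i i).
    by move=> k; apply: sumr_ge0 => i _; exact: (dens_diag _ i (Hd k)).2.
  have tA : \sum_(i <- S) a i <= K.
    apply: le_trans (sum_supp a S f _ _ uS) _.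
    - by move=> x; exact: ler0n.
    - by move=> x /negbTE; rewrite /a => ->.
    rewrite /K big_seq [X in _ <= X]big_seq; apply: ler_sum => i.
    by rewrite mem_undup /a => ->.
  have tA0 : 0 <= \sum_(i <- S) a i by apply: sumr_ge0 => i _; exact: ler0n.
  have En0 : En != 0 by rewrite gt_eqF.
  have eps0 : eps != 0 by rewrite gt_eqF.
  have EM : En / M = eps ^+ 2 / 64.
    by rewrite /M; field; rewrite eps0 En0.
  have dlK : dl * (K * K + 1) = eps ^+ 2 / 8.
    by rewrite /dl divfK // gt_eqF // ltr_wpDl // mulr_ge0.
  have h1 : dl * (\sum_(i <- S) a i) * (\sum_(j <- S) a j) <= eps ^+ 2 / 8.
    rewrite -mulrA -dlK; apply: ler_wpM2l; first exact: ltW.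
    apply: le_trans (_ : K * K <= _); last by rewrite lerDl.
    exact: ler_pM.
  have h2 : forall k, (\sum_(i <- S) bb i * complex.Re (rho k i i)) *
      (\sum_(j <- S) complex.Re (rho k j j)) <= eps ^+ 2 / 64.
    move=> k; rewrite -EM; apply: le_trans (tB k).
    by rewrite ler_piMr // tB0.
  have := h2 (phi m); have := h2 (phi n); rewrite /dm /dn in h1 *.
  nra.
have h0 : (0 <= hs_norm2 D)%E by apply: esum_ge0 => p _; rewrite lee_fin sqmod_ge0.
change (hs_norm D < eps%:E)%E.
rewrite /hs_norm; move: h0 HS2; case: (hs_norm2 D) => [r| |] //=.
move=> r0 rle; rewrite ltry lte_fin.
have rle' : r <= (eps / 2) ^+ 2.
  move: rle; rewrite lee_fin (_ : (eps / 2) ^+ 2 = eps ^+ 2 / 4) //; field; done.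

have hs : Num.sqrt r <= eps / 2.
  have e2p : 0 <= eps / 2 by rewrite divr_ge0 // ltW.
  rewrite -(ger0_norm e2p) -sqrtr_sqr.
  exact: ler_wsqrtr.
apply: le_lt_trans hs _; lra.
Qed.
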